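(* Let $p>\tfrac12$, $d_\pm\in\mathbb R$, and $d_k=d_+k^{-p}$ for $k>0$, $d_k=d_-|k|^{-p}$ for $k<0$, $d_0=0$. Let $\mathfrak D(x)=\sum_{k\in\mathbb Z}d_k e^{\mathrm i kx}$ (a $2\pi$-periodic distribution). Let $h_0\in C^\infty_c(\mathbb R)$ with $h_0=1$ on $[-\pi,\pi]$ and $\operatorname{supp}h_0\subset[-\tfrac{3\pi}{2},\tfrac{3\pi}{2}]$. Let $\zeta\in C^\infty(\mathbb R)$ vanish in a neighbourhood of $0$ and equal $1$ in a neighbourhood of infinity, let $\delta(\xi)=d_+\xi^{-p}$ for $\xi>0$, $\delta(\xi)=d_-|\xi|^{-p}$ for $\xi<0$, and let $\mathfrak F$ be the tempered distribution with $\widehat{\mathfrak F}=\zeta\delta$. Then the function $\mathfrak D_1=\mathfrak D\,h_0-\mathfrak F$ satisfies \[ \widehat{\mathfrak D_1}(\xi)=o(|\xi|^{-p}),\qquad |\xi|\to\infty. \]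
   Context: The Fourier transform is normalized as $\widehat f(\xi)=\frac1{2\pi}\int_{\mathbb R}f(x)e^{-\mathrm i x\xi}\,dx$ (extended to tempered distributions), so that $\widehat{\mathfrak D h_0}(\xi)=\sum_{k}d_k\widehat{h_0}(\xi-k)$. *)

(* Defs.v *)
From Stdlib Require Import Reals Lra ZArith ClassicalEpsilon.
Open Scope R_scope.

Definition smooth (f : R -> R) : Prop :=
  exists D : nat -> R -> R,
    (forall x, D 0%nat x = f x) /\
    (forall n x, derivable_pt_lim (D n) x (D (S n) x)).

Definition is_RInt (f : R -> R) (a b v : R) : Prop :=
  exists pr : Riemann_integrable f a b, RiemannInt pr = v.

Definition RInt (f : R -> R) (a b : R) : R :=
  epsilon (inhabits 0) (fun v => is_RInt f a b v).

Definition zsum (a : Z -> R) : R :=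
  epsilon (inhabits 0) (fun v => infinite_sum (fun n => a (Z.of_nat n)) v)
  + epsilon (inhabits 0)
      (fun v => infinite_sum (fun n => a (- Z.of_nat (S n))%Z) v).

(* Real and imaginary parts of the Fourier transform
   hat f(xi) = 1/(2 pi) int f(x) e^{-i x xi} dx of a real function f
   supported in [-L, L]. *)
Definition FT_re (f : R -> R) (L xi : R) : R :=
  / (2 * PI) * RInt (fun x => f x * cos (x * xi)) (- L) L.
Definition FT_im (f : R -> R) (L xi : R) : R :=
  - (/ (2 * PI) * RInt (fun x => f x * sin (x * xi)) (- L) L).

Definition dcoef (p dp dm : R) (k : Z) : R :=
  if (0 <? k)%Z then dp * Rpower (IZR k) (- p)
  else if (k <? 0)%Z then dm * Rpower (IZR (- k)) (- p)
  else 0.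

(* The homogeneous symbol delta(xi) (value at 0 irrelevant). *)
Definition delta (p dp dm xi : R) : R :=
  if Rlt_dec 0 xi then dp * Rpower xi (- p)
  else if Rlt_dec xi 0 then dm * Rpower (- xi) (- p)
  else 0.

(* hat(D h0)(xi) = sum_k d_k hat h0(xi - k), split in real/imag parts,
   with h0 supported in [-2pi, 2pi]. *)
Definition Dh0_hat_re (p dp dm : R) (h0 : R -> R) (xi : R) : R :=
  zsum (fun k => dcoef p dp dm k * FT_re h0 (2 * PI) (xi - IZR k)).
Definition Dh0_hat_im (p dp dm : R) (h0 : R -> R) (xi : R) : R :=
  zsum (fun k => dcoef p dp dm k * FT_im h0 (2 * PI) (xi - IZR k)).

Definition D1_hat_re (p dp dm : R) (h0 zeta : R -> R) (xi : R) : R :=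
  Dh0_hat_re p dp dm h0 xi - zeta xi * delta p dp dm xi.
Definition D1_hat_im (p dp dm : R) (h0 zeta : R -> R) (xi : R) : R :=
  Dh0_hat_im p dp dm h0 xi.

(* Main.v *)
Require Import Defs.
From Stdlib Require Import Reals ZArith Lra Lia ClassicalEpsilon.
From Coquelicot Require Import Coquelicot.
Open Scope R_scope.

Lemma bridge (f : R -> R) a b :
  (forall x, Rmin a b <= x <= Rmax a b -> continuous f x) ->
  Defs.RInt f a b = RInt f a b.
Proof.
  intros Hc.
  assert (Hex : ex_RInt f a b) by (apply (@ex_RInt_continuous R_CompleteNormedModule); auto).
  pose proof (ex_RInt_Reals_0 _ _ _ Hex) as pr.
  assert (E : RInt f a b = RiemannInt pr).
  { apply is_RInt_unique. apply ex_RInt_Reals_aux_1. }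
  unfold Defs.RInt.
  destruct (epsilon_spec (inhabits 0) (fun v => Defs.is_RInt f a b v)) as [pr' H].
  { exists (RiemannInt pr). exists pr. reflexivity. }
  rewrite <- H, E. apply RiemannInt_P5.
Qed.

Lemma RInt_plusR (f g : R -> R) a b : ex_RInt f a b -> ex_RInt g a b ->
  RInt (fun x => f x + g x) a b = RInt f a b + RInt g a b.
Proof. intros; apply (RInt_plus f g); auto. Qed.
Lemma RInt_scalR (f : R -> R) a b c : ex_RInt f a b ->
  RInt (fun x => c * f x) a b = c * RInt f a b.
Proof. intros; apply (RInt_scal f a b c); auto. Qed.
Lemma exRc (f : R -> R) a b : (forall x, continuous f x) -> ex_RInt f a b.
Proof. intros; apply (@ex_RInt_continuous R_CompleteNormedModule); auto. Qed.
Lemma RInt_uniqR (f : R -> R) a b l : is_RInt f a b l -> RInt f a b = l.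
Proof. apply (@is_RInt_unique R_CompleteNormedModule). Qed.

Section Deriv.
Variable D : nat -> R -> R.
Hypothesis HD : forall n x, derivable_pt_lim (D n) x (D (S n) x).

Lemma D_cont n x : continuous (D n) x.
Proof.
  apply continuity_pt_filterlim. apply derivable_continuous_pt.
  exists (D (S n) x). apply HD.
Qed.

Lemma D_is_derive n x : is_derive (D n) x (D (S n) x).
Proof. apply is_derive_Reals. apply HD. Qed.

Hypothesis H0 : forall x, 3 * PI / 2 < Rabs x -> D 0%nat x = 0.

Lemma D_vanish n x : 3 * PI / 2 < Rabs x -> D n x = 0.
Proof.
  revert x; induction n as [|n IH]; intros x Hx; [now apply H0|].
  apply (uniqueness_limite (D n) x); [apply HD|].
  intros eps Heps.
  assert (Hd : 0 < Rabs x - 3 * PI / 2) by lra.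
  exists (mkposreal _ Hd). simpl. intros h Hh Hh2.
  rewrite (IH x Hx), IH. 2: { pose proof (Rabs_triang_inv x (-h)).
     rewrite Rabs_Ropp in H. replace (x - - h) with (x+h) in H by ring. lra. }
  replace ((0-0)/h - 0) with 0 by (field; auto). rewrite Rabs_R0; lra.
Qed.

Lemma D_bound n : exists M, forall x, Rabs (D n x) <= M.
Proof.
  destruct (continuity_ab_maj (fun x => Rabs (D n x)) (-(2*PI)) (2*PI)) as [m [Hm _]].
  { pose proof PI_RGT_0; lra. }
  { intros c _. apply continuity_pt_comp with (f1 := D n) (f2 := Rabs).
    apply derivable_continuous_pt. exists (D (S n) c). apply HD.
    apply Rcontinuity_abs. }
  exists (Rabs (D n m)). intros x.
  destruct (Rle_dec (Rabs x) (2*PI)).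
  - apply Hm. apply Rabs_le_between; auto.
  - rewrite D_vanish. rewrite Rabs_R0; apply Rabs_pos.
    pose proof PI_RGT_0; lra.
Qed.

Definition Ic m e := RInt (fun x => D m x * cos (x * e)) (-(2*PI)) (2*PI).
Definition Is m e := RInt (fun x => D m x * sin (x * e)) (-(2*PI)) (2*PI).

Lemma cont_mul_cos m e x : continuous (fun x => D m x * cos (x*e)) x.
Proof.
  apply (continuous_mult (D m) (fun x => cos (x*e))). apply D_cont.
  apply (@ex_derive_continuous R_AbsRing R_NormedModule). auto_derive. auto.
Qed.
Lemma cont_mul_sin m e x : continuous (fun x => D m x * sin (x*e)) x.
Proof.
  apply (continuous_mult (D m) (fun x => sin (x*e))). apply D_cont.
  apply (@ex_derive_continuous R_AbsRing R_NormedModule). auto_derive. auto.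
Qed.

Lemma D_2PI n : D n (2*PI) = 0 /\ D n (-(2*PI)) = 0.
Proof.
  pose proof PI_RGT_0. split; apply D_vanish.
  rewrite Rabs_right; lra. rewrite Rabs_Ropp, Rabs_right; lra.
Qed.

Lemma IBP1 m e : e * Ic m e = - Is (S m) e.
Proof.
  pose (df := fun x => D (S m) x * sin (x*e) + e * (D m x * cos (x*e))).
  assert (H : is_RInt df (-(2*PI)) (2*PI)
     (minus ((fun x => D m x * sin (x*e)) (2*PI)) ((fun x => D m x * sin (x*e)) (-(2*PI))))).
  { apply (@is_RInt_derive R_CompleteNormedModule (fun x => D m x * sin (x*e)) df).
    - intros x _. unfold df.
      evar (l : R). replace (D (S m) x * sin (x*e) + e * (D m x * cos (x*e))) with l.
      apply (is_derive_mult (D m) (fun x => sin (x*e))). apply D_is_derive.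
      auto_derive; auto. intros; apply Rmult_comm.
      unfold l, plus, mult; simpl. ring.
    - intros x _. unfold df. apply (continuous_plus (fun x => D (S m) x * sin (x*e))).
      apply cont_mul_sin. apply (continuous_scal_r e (fun x => D m x * cos (x*e))).
      apply cont_mul_cos. }
  destruct (D_2PI m) as [E1 E2]. simpl in H. rewrite E1, E2 in H.
  apply RInt_uniqR in H. unfold df in H.
  rewrite RInt_plusR, RInt_scalR in H.
  2: apply exRc; intros; apply cont_mul_cos.
  2: apply exRc; intros; apply cont_mul_sin.
  2: apply exRc; intros; apply (continuous_scal_r e (fun x => D m x * cos (x*e))); apply cont_mul_cos.
  unfold Ic, Is. unfold minus, plus, opp in H; simpl in H. lra.
Qed.

Lemma IBP2 m e : e * Is m e = Ic (S m) e.
Proof.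
  pose (df := fun x => D (S m) x * cos (x*e) + (- e) * (D m x * sin (x*e))).
  assert (H : is_RInt df (-(2*PI)) (2*PI)
     (minus ((fun x => D m x * cos (x*e)) (2*PI)) ((fun x => D m x * cos (x*e)) (-(2*PI))))).
  { apply (@is_RInt_derive R_CompleteNormedModule (fun x => D m x * cos (x*e)) df).
    - intros x _. unfold df.
      evar (l : R). replace (D (S m) x * cos (x*e) + - e * (D m x * sin (x*e))) with l.
      apply (is_derive_mult (D m) (fun x => cos (x*e))). apply D_is_derive.
      auto_derive; auto. intros; apply Rmult_comm.
      unfold l, plus, mult; simpl. ring.
    - intros x _. unfold df. apply (continuous_plus (fun x => D (S m) x * cos (x*e))).
      apply cont_mul_cos. apply (continuous_scal_r (-e) (fun x => D m x * sin (x*e))).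
      apply cont_mul_sin. }
  destruct (D_2PI m) as [E1 E2]. simpl in H. rewrite E1, E2 in H.
  apply RInt_uniqR in H. unfold df in H.
  rewrite RInt_plusR, RInt_scalR in H.
  2: apply exRc; intros; apply cont_mul_sin.
  2: apply exRc; intros; apply cont_mul_cos.
  2: apply exRc; intros; apply (continuous_scal_r (-e) (fun x => D m x * sin (x*e))); apply cont_mul_sin.
  unfold Ic, Is. unfold minus, plus, opp in H; simpl in H. lra.
Qed.

Lemma Ic_bound0 m : exists C, forall e, Rabs (Ic m e) <= C /\ Rabs (Is m e) <= C.
Proof.
  destruct (D_bound m) as [M HM]. exists (4*PI*M). intros e. pose proof PI_RGT_0.
  replace (4*PI*M) with ((2*PI - -(2*PI)) * M) by ring.
  split; apply abs_RInt_le_const; try lra.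
  - apply exRc; intros; apply cont_mul_cos.
  - intros t _. rewrite Rabs_mult. pose proof (COS_bound (t*e)).
    pose proof (Rabs_pos (D m t)). pose proof (HM t).
    assert (Rabs (cos (t*e)) <= 1) by (apply Rabs_le; lra). nra.
  - apply exRc; intros; apply cont_mul_sin.
  - intros t _. rewrite Rabs_mult. pose proof (SIN_bound (t*e)).
    pose proof (Rabs_pos (D m t)). pose proof (HM t).
    assert (Rabs (sin (t*e)) <= 1) by (apply Rabs_le; lra). nra.
Qed.

Lemma Ic_boundn n : forall m, exists C, forall e,
  Rabs e ^ n * Rabs (Ic m e) <= C /\ Rabs e ^ n * Rabs (Is m e) <= C.
Proof.
  induction n as [|n IH]; intros m.
  - destruct (Ic_bound0 m) as [C HC]. exists C. intros e. simpl. rewrite !Rmult_1_l. auto.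
  - destruct (IH (S m)) as [C HC]. exists C. intros e. simpl.
    replace (Rabs e * Rabs e ^ n * Rabs (Ic m e)) with (Rabs e ^ n * Rabs (e * Ic m e)) by (rewrite Rabs_mult; ring).
    replace (Rabs e * Rabs e ^ n * Rabs (Is m e)) with (Rabs e ^ n * Rabs (e * Is m e)) by (rewrite Rabs_mult; ring).
    rewrite IBP1, IBP2, Rabs_Ropp. destruct (HC e); split; auto.
Qed.

Lemma pow_1plus t n : 0 <= t -> (1 + t) ^ n <= 2 ^ n * (1 + t ^ n).
Proof.
  intros Ht. destruct (Rle_dec t 1).
  - apply Rle_trans with (2 ^ n). apply pow_incr; lra.
    pose proof (pow_le t n Ht). pose proof (pow_le 2 n ltac:(lra)). nra.
  - apply Rle_trans with ((2*t)^n). apply pow_incr; lra.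
    rewrite Rpow_mult_distr. pose proof (pow_le 2 n ltac:(lra)). nra.
Qed.

Lemma Ic_decay n : exists K, 0 < K /\ forall e,
  Rabs (Ic 0 e) <= K / (1 + Rabs e) ^ n /\ Rabs (Is 0 e) <= K / (1 + Rabs e) ^ n.
Proof.
  destruct (Ic_boundn 0 0) as [C0 H0']. destruct (Ic_boundn n 0) as [Cn Hn].
  exists (2 ^ n * (Rabs C0 + Rabs Cn) + 1). split.
  { pose proof (pow_le 2 n ltac:(lra)). pose proof (Rabs_pos C0); pose proof (Rabs_pos Cn). nra. }
  intros e. pose proof (Rabs_pos e) as Hp.
  assert (Hpos : 0 < (1 + Rabs e) ^ n) by (apply pow_lt; lra).
  pose proof (pow_1plus (Rabs e) n Hp) as Hpw.
  destruct (H0' e) as [A0 B0]. destruct (Hn e) as [An Bn]. simpl in A0, B0.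
  rewrite Rmult_1_l in A0, B0.
  pose proof (pow_le 2 n ltac:(lra)). pose proof (Rabs_pos (Ic 0 e)). pose proof (Rabs_pos (Is 0 e)).
  pose proof (pow_le (Rabs e) n Hp).
  pose proof (Rle_abs C0). pose proof (Rle_abs Cn).
  assert (Hdiv : forall a K, a * (1 + Rabs e) ^ n <= K -> a <= K / (1 + Rabs e) ^ n).
  { intros a K Ha. apply (Rmult_le_reg_r ((1+Rabs e)^n)); auto. unfold Rdiv.
    rewrite Rmult_assoc, Rinv_l; lra. }
  split; apply Hdiv.
  - apply Rle_trans with (Rabs (Ic 0 e) * (2 ^ n * (1 + Rabs e ^ n))).
    apply Rmult_le_compat_l; auto. nra.
  - apply Rle_trans with (Rabs (Is 0 e) * (2 ^ n * (1 + Rabs e ^ n))).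
    apply Rmult_le_compat_l; auto. nra.
Qed.

End Deriv.

Definition sn (f : nat -> R) (n : nat) : R := sum_n f n.

Lemma sum_SnR (f : nat -> R) n : sn f (S n) = sn f n + f (S n).
Proof. exact (@sum_Sn R_AbelianMonoid f n). Qed.
Lemma sum_OR (f : nat -> R) : sn f 0 = f 0%nat.
Proof. exact (@sum_O R_AbelianMonoid f). Qed.

Lemma sum_le (f g : nat -> R) N : (forall n, f n <= g n) -> sn f N <= sn g N.
Proof. intros H; induction N; [rewrite !sum_OR; auto| rewrite !sum_SnR; specialize (H (S N)); lra]. Qed.

Lemma telesc (g : nat -> R) N : sn (fun n => g (S n) - g n) N = g (S N) - g 0%nat.
Proof. induction N; [rewrite sum_OR; ring| rewrite sum_SnR, IHN; ring]. Qed.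

Lemma series_of_lim (f : nat -> R) (l : R) : is_lim_seq (sn f) l -> is_series f l.
Proof. intros H; exact H. Qed.
Lemma lim_of_series (f : nat -> R) (l : R) : is_series f l -> is_lim_seq (sn f) l.
Proof. intros H; exact H. Qed.

Lemma bounded_series (f : nat -> R) B : (forall n, 0 <= f n) -> (forall N, sn f N <= B) ->
  exists s, is_series f s /\ 0 <= s /\ s <= B.
Proof.
  intros Hp HB.
  assert (Hinc : forall n, sn f n <= sn f (S n)) by (intros; rewrite sum_SnR; specialize (Hp (S n)); lra).
  destruct (ex_finite_lim_seq_incr _ B Hinc HB) as [l Hl].
  exists l. split; [apply series_of_lim; auto|]. split.
  - pose proof (is_lim_seq_incr_compare _ _ Hl Hinc 0%nat). rewrite sum_OR in H. specialize (Hp 0%nat). lra.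
  - pose proof (is_lim_seq_le _ _ _ _ HB Hl (is_lim_seq_const B)). simpl in H. auto.
Qed.

Definition zsums (a : Z -> R) (s : R) := exists s1 s2,
  is_series (fun n => a (Z.of_nat n)) s1 /\ is_series (fun n => a (- Z.of_nat (S n))%Z) s2 /\ s = s1 + s2.

Lemma zsum_eq a s : zsums a s -> zsum a = s.
Proof.
  intros [s1 [s2 [H1 [H2 ->]]]]. unfold zsum.
  pose proof (epsilon_spec (inhabits 0) (fun v => infinite_sum (fun n => a (Z.of_nat n)) v)
     (ex_intro _ s1 (proj1 (is_series_Reals _ _) H1))) as E1.
  pose proof (epsilon_spec (inhabits 0) (fun v => infinite_sum (fun n => a (- Z.of_nat (S n))%Z) v)
     (ex_intro _ s2 (proj1 (is_series_Reals _ _) H2))) as E2.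
  apply is_series_Reals in E1. apply is_series_Reals in E2.
  apply is_series_unique in E1, E2, H1, H2. rewrite <- E1, <- E2, H1, H2. reflexivity.
Qed.

Lemma is_series_plusR (a b : nat -> R) la lb : is_series a la -> is_series b lb ->
  is_series (fun n => a n + b n) (la + lb).
Proof. intros; apply (@is_series_plus R_AbsRing R_NormedModule a b); auto. Qed.
Lemma is_series_scalR (c : R) (a : nat -> R) la : is_series a la ->
  is_series (fun n => c * a n) (c * la).
Proof. intros; apply (@is_series_scal_l R_AbsRing R_NormedModule c a); auto. Qed.

Lemma zsums_plus a b sa sb : zsums a sa -> zsums b sb -> zsums (fun k => a k + b k) (sa + sb).
Proof.
  intros [a1 [a2 [A1 [A2 ->]]]] [b1 [b2 [B1 [B2 ->]]]].
  exists (a1+b1), (a2+b2). repeat split.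
  apply (is_series_plusR (fun n => a (Z.of_nat n)) (fun n => b (Z.of_nat n))); auto.
  apply (is_series_plusR (fun n => a (- Z.of_nat (S n))%Z) (fun n => b (- Z.of_nat (S n))%Z)); auto. ring.
Qed.

Lemma zsums_scal c a sa : zsums a sa -> zsums (fun k => c * a k) (c * sa).
Proof.
  intros [a1 [a2 [A1 [A2 ->]]]].
  exists (c*a1), (c*a2). repeat split.
  apply (is_series_scalR c (fun n => a (Z.of_nat n))); auto.
  apply (is_series_scalR c (fun n => a (- Z.of_nat (S n))%Z)); auto. ring.
Qed.

Lemma series_dom (a b : nat -> R) sb : (forall n, Rabs (a n) <= b n) -> is_series b sb ->
  exists sa, is_series a sa /\ Rabs sa <= sb.
Proof.
  intros Hd Hb.
  assert (Eb : ex_series b) by (exists sb; auto).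
  assert (Ea : ex_series (fun n => Rabs (a n))).
  { apply (@ex_series_le R_AbsRing R_CompleteNormedModule _ b); auto.
    intros n. change (norm (Rabs (a n))) with (Rabs (Rabs (a n))). rewrite Rabs_Rabsolu; auto. }
  assert (Ea' : ex_series a) by (apply ex_series_Rabs; auto).
  destruct Ea' as [sa Ha]. exists sa. split; auto.
  apply is_series_unique in Ha. rewrite <- Ha.
  apply Rle_trans with (Series (fun n => Rabs (a n))). apply Series_Rabs; auto.
  rewrite <- (is_series_unique _ _ Hb). apply Series_le; auto.
  intros n; split; [apply Rabs_pos| auto].
Qed.

Lemma zsums_dom a b sb : (forall k, Rabs (a k) <= b k) -> zsums b sb ->
  exists sa, zsums a sa /\ Rabs sa <= sb.
Proof.
  intros Hd [b1 [b2 [B1 [B2 ->]]]].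
  destruct (series_dom (fun n => a (Z.of_nat n)) _ _ (fun n => Hd _) B1) as [a1 [A1 L1]].
  destruct (series_dom (fun n => a (- Z.of_nat (S n))%Z) _ _ (fun n => Hd _) B2) as [a2 [A2 L2]].
  exists (a1 + a2). split. exists a1, a2; auto.
  pose proof (Rabs_triang a1 a2). lra.
Qed.

Definition vw (y : R) := / (1 + Rabs y) ^ 2.

Lemma vw_pos y : 0 < vw y.
Proof. unfold vw. apply Rinv_0_lt_compat. apply pow_lt. pose proof (Rabs_pos y); lra. Qed.

Lemma vw_atan y : vw y <= 2 * (atan (y + 1) - atan y).
Proof.
  destruct (MVT_cor2 atan (fun x => / (1 + x ^ 2)) y (y+1)) as [c [Hc Hc2]].
  lra. intros; apply derivable_pt_lim_atan.
  rewrite Hc. replace (y + 1 - y) with 1 by ring. unfold vw.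
  assert (Hc3 : Rabs c <= Rabs y + 1).
  { unfold Rabs; repeat destruct Rcase_abs; lra. }
  pose proof (Rabs_pos c). pose proof (Rabs_pos y).
  assert (c ^ 2 = Rabs c ^ 2) by (simpl; rewrite !Rmult_1_r; rewrite <- Rabs_mult; rewrite Rabs_right; nra).
  assert (1 + c^2 <= 2 * (1 + Rabs y)^2) by (rewrite H1; simpl; nra).
  assert (0 < 1 + c^2) by (pose proof (pow2_ge_0 c); lra).
  replace (2 * (/ (1 + c^2) * 1)) with (/ ((1 + c^2) / 2)) by (field; lra).
  apply Rinv_le_contravar; lra.
Qed.

Lemma izr_neg n : IZR (- Z.of_nat (S n)) = - (INR n + 1).
Proof. rewrite opp_IZR, <- INR_IZR_INZ, S_INR. ring. Qed.

Lemma wsum xi : exists s, zsums (fun k => vw (xi - IZR k)) s /\ s <= 4 * PI.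
Proof.
  pose proof PI_RGT_0.
  destruct (bounded_series (fun n => vw (xi - IZR (Z.of_nat n))) (2*PI)) as [s1 [S1 [_ L1]]].
  { intros; left; apply vw_pos. }
  { intros N. apply Rle_trans with (sn (fun n => 2 * (atan (INR (S n) - xi) - atan (INR n - xi))) N).
    apply sum_le. intros n. rewrite <- INR_IZR_INZ. unfold vw at 1. rewrite <- Rabs_Ropp.
    replace (- (xi - INR n)) with (INR n - xi) by ring. rewrite S_INR.
    replace (INR n + 1 - xi) with ((INR n - xi) + 1) by ring. apply vw_atan.
    replace (sn (fun n => 2 * (atan (INR (S n) - xi) - atan (INR n - xi))) N) with
      (2 * sn (fun n => (atan (INR (S n) - xi) - atan (INR n - xi))) N).
    rewrite (telesc (fun n => atan (INR n - xi))).
    pose proof (atan_bound (INR (S N) - xi)). pose proof (atan_bound (INR 0 - xi)). lra.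
    clear; induction N; [rewrite !sum_OR; ring| rewrite !sum_SnR, <- IHN; ring]. }
  destruct (bounded_series (fun n => vw (xi - IZR (- Z.of_nat (S n)))) (2*PI)) as [s2 [S2 [_ L2]]].
  { intros; left; apply vw_pos. }
  { intros N. apply Rle_trans with (sn (fun n => 2 * (atan (xi + INR (S n) + 1) - atan (xi + INR n + 1))) N).
    apply sum_le. intros n. rewrite izr_neg, S_INR.
    replace (xi - - (INR n + 1)) with (xi + INR n + 1) by ring.
    replace (xi + (INR n + 1) + 1) with ((xi + INR n + 1) + 1) by ring. apply vw_atan.
    replace (sn (fun n => 2 * (atan (xi + INR (S n) + 1) - atan (xi + INR n + 1))) N) with
      (2 * sn (fun n => (atan (xi + INR (S n) + 1) - atan (xi + INR n + 1))) N).
    rewrite (telesc (fun n => atan (xi + INR n + 1))).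
    pose proof (atan_bound (xi + INR (S N) + 1)). pose proof (atan_bound (xi + INR 0 + 1)). lra.
    clear; induction N; [rewrite !sum_OR; ring| rewrite !sum_SnR, <- IHN; ring]. }
  exists (s1 + s2). split. exists s1, s2; auto. lra.
Qed.

Fixpoint ps (f : nat -> R) (n : nat) : R :=
  match n with O => 0 | S n => ps f n + f n end.

Lemma sn_ps f N : sn f N = ps f (S N).
Proof. induction N; [rewrite sum_OR; simpl; ring| rewrite sum_SnR, IHN; simpl; ring]. Qed.

Lemma ps_ext f g n : (forall i, (i < n)%nat -> f i = g i) -> ps f n = ps g n.
Proof. induction n; intros H; simpl; auto. rewrite IHn, H; auto. Qed.

Lemma ps_plus f g n : ps (fun i => f i + g i) n = ps f n + ps g n.
Proof. induction n; simpl; [ring| rewrite IHn; ring]. Qed.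
Lemma ps_scal c f n : ps (fun i => c * f i) n = c * ps f n.
Proof. induction n; simpl; [ring| rewrite IHn; ring]. Qed.
Lemma ps_scal_r c f n : ps (fun i => f i * c) n = ps f n * c.
Proof. induction n; simpl; [ring| rewrite IHn; ring]. Qed.
Lemma ps_le f g n : (forall i, (i < n)%nat -> f i <= g i) -> ps f n <= ps g n.
Proof. induction n; intros H; simpl; [lra|]. pose proof (H n ltac:(lia)). pose proof (IHn ltac:(intros; apply H; lia)). lra. Qed.
Lemma ps_abs f n : Rabs (ps f n) <= ps (fun i => Rabs (f i)) n.
Proof. induction n; simpl. rewrite Rabs_R0; lra. pose proof (Rabs_triang (ps f n) (f n)); lra. Qed.
Lemma ps_const c n : ps (fun _ => c) n = INR n * c.
Proof. induction n; simpl ps; [simpl; ring| rewrite IHn, S_INR; ring]. Qed.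
Lemma ps_nonneg f n : (forall i, 0 <= f i) -> 0 <= ps f n.
Proof. intros H; induction n; simpl; [lra| pose proof (H n); lra]. Qed.

Lemma ps_shift g n : ps g (S n) = g 0%nat + ps (fun i => g (S i)) n.
Proof. induction n; simpl in *; [ring| rewrite IHn; ring]. Qed.

Lemma ps_add g m k : ps g (m + k) = ps g m + ps (fun i => g (m + i)%nat) k.
Proof. induction k; simpl. rewrite Nat.add_0_r; ring. rewrite Nat.add_succ_r; simpl. rewrite IHk; ring. Qed.

Lemma ps_rev f n : ps (fun l => f (n - 1 - l)%nat) n = ps f n.
Proof.
  induction n; auto. rewrite ps_shift.
  replace (S n - 1 - 0)%nat with n by lia.
  rewrite (ps_ext _ (fun l => f (n - 1 - l)%nat)) by (intros; f_equal; lia).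
  rewrite IHn. simpl. ring.
Qed.

Lemma ps_prod f g n : ps f n * ps g n = ps (fun j => ps (fun l => f j * g l) n) n.
Proof.
  rewrite <- ps_scal_r. apply ps_ext. intros j _. rewrite <- ps_scal. reflexivity.
Qed.

Lemma ps_delta c j n : (j < n)%nat -> ps (fun l => if Nat.eq_dec j l then c else 0) n = c.
Proof.
  induction n; intros H; [lia|]. simpl.
  destruct (Nat.eq_dec j n).
  - subst. rewrite (ps_ext _ (fun _ => 0)). rewrite ps_const; ring.
    intros i Hi. destruct Nat.eq_dec; auto; lia.
  - rewrite IHn by lia. ring.
Qed.

Lemma cont_ps (F : nat -> R -> R) n x : (forall j, continuous (F j) x) ->
  continuous (fun x => ps (fun j => F j x) n) x.
Proof.
  intros H; induction n; simpl.
  - apply continuous_const.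
  - apply (continuous_plus (fun x => ps (fun j => F j x) n) (F n)); auto.
Qed.

Lemma RInt_ps (F : nat -> R -> R) a b n : (forall j x, continuous (F j) x) ->
  RInt (fun x => ps (fun j => F j x) n) a b = ps (fun j => RInt (F j) a b) n.
Proof.
  intros H; induction n; simpl.
  - rewrite RInt_const. unfold scal; simpl. unfold mult; simpl. ring.
  - rewrite RInt_plusR. rewrite IHn; auto.
    apply exRc; intros; apply cont_ps; auto. apply exRc; auto.
Qed.

Lemma cont_cos_lin c x : continuous (fun x => cos (c * x)) x.
Proof. apply (@ex_derive_continuous R_AbsRing R_NormedModule). auto_derive. auto. Qed.
Lemma cont_sin_lin c x : continuous (fun x => sin (c * x)) x.
Proof. apply (@ex_derive_continuous R_AbsRing R_NormedModule). auto_derive. auto. Qed.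

Definition CS n x := ps (fun j => cos (INR j * x)) n.
Definition SS n x := ps (fun j => sin (INR j * x)) n.
Definition KN n x := CS n x ^ 2 + SS n x ^ 2.

Lemma KN_nonneg n x : 0 <= KN n x.
Proof. unfold KN. pose proof (pow2_ge_0 (CS n x)). pose proof (pow2_ge_0 (SS n x)). lra. Qed.

Lemma cont_KN n x : continuous (KN n) x.
Proof.
  unfold KN, CS, SS. simpl.
  assert (C1 : continuous (fun x => ps (fun j => cos (INR j * x)) n) x)
    by (apply (cont_ps (fun j x => cos (INR j * x))); intros; apply cont_cos_lin).
  assert (C2 : continuous (fun x => ps (fun j => sin (INR j * x)) n) x)
    by (apply (cont_ps (fun j x => sin (INR j * x))); intros; apply cont_sin_lin).
  apply (continuous_plus (fun x => _ * (_ * 1)) (fun x => _ * (_ * 1))).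
  - apply (continuous_mult (fun x => ps (fun j => cos (INR j * x)) n)); auto.
    apply (continuous_mult (fun x => ps (fun j => cos (INR j * x)) n)); auto. apply continuous_const.
  - apply (continuous_mult (fun x => ps (fun j => sin (INR j * x)) n)); auto.
    apply (continuous_mult (fun x => ps (fun j => sin (INR j * x)) n)); auto. apply continuous_const.
Qed.

Lemma CS_tel n x : 2 * sin (x/2) * CS n x = sin ((INR n - 1/2) * x) + sin (x/2).
Proof.
  unfold CS. induction n; simpl ps.
  - simpl. replace ((0 - 1/2) * x) with (- (x/2)) by field. rewrite sin_neg. ring.
  - rewrite Rmult_plus_distr_l, IHn, S_INR.
    replace ((INR n - 1/2) * x) with (INR n * x - x/2) by field.
    replace ((INR n + 1 - 1/2) * x) with (INR n * x + x/2) by field.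
    rewrite sin_minus, sin_plus. ring.
Qed.

Lemma SS_tel n x : 2 * sin (x/2) * SS n x = cos (x/2) - cos ((INR n - 1/2) * x).
Proof.
  unfold SS. induction n; simpl ps.
  - simpl. replace ((0 - 1/2) * x) with (- (x/2)) by field. rewrite cos_neg. ring.
  - rewrite Rmult_plus_distr_l, IHn, S_INR.
    replace ((INR n - 1/2) * x) with (INR n * x - x/2) by field.
    replace ((INR n + 1 - 1/2) * x) with (INR n * x + x/2) by field.
    rewrite cos_minus, cos_plus. ring.
Qed.

Lemma KN_bound n x : sin (x/2) ^ 2 * KN n x <= 1.
Proof.
  unfold KN.
  assert (E : 4 * (sin (x/2) ^ 2 * (CS n x ^ 2 + SS n x ^ 2)) =
    (2 * sin (x/2) * CS n x) ^ 2 + (2 * sin (x/2) * SS n x) ^ 2) by ring.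
  rewrite CS_tel, SS_tel in E.
  set (A := (INR n - 1/2) * x) in *. set (b := x/2) in *.
  assert (E2 : (sin A + sin b)^2 + (cos b - cos A)^2 =
     (sin A ^2 + cos A ^2) + (sin b^2 + cos b^2) - 2*(cos A * cos b - sin A * sin b)) by ring.
  pose proof (sin2_cos2 A). pose proof (sin2_cos2 b). unfold Rsqr in *.
  pose proof (COS_bound (A + b)). rewrite cos_plus in H1.
  replace (sin A ^2 + cos A ^2) with 1 in E2 by (simpl; lra).
  replace (sin b ^2 + cos b ^2) with 1 in E2 by (simpl; lra).
  lra.
Qed.

Lemma KN_expand n x : KN n x = ps (fun j => ps (fun l => cos ((INR j - INR l) * x)) n) n.
Proof.
  unfold KN, CS, SS. simpl. rewrite !Rmult_1_r, !ps_prod, <- ps_plus.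
  apply ps_ext; intros j _. rewrite <- ps_plus. apply ps_ext; intros l _.
  replace ((INR j - INR l) * x) with (INR j * x - INR l * x) by ring.
  rewrite cos_minus. ring.
Qed.

Lemma int_cos_m (j l : nat) :
  RInt (fun x => cos ((INR j - INR l) * x)) (-PI) PI = if Nat.eq_dec j l then 2 * PI else 0.
Proof.
  destruct (Nat.eq_dec j l).
  - subst. rewrite (RInt_ext _ (fun _ => 1)). rewrite RInt_const. unfold scal; simpl; unfold mult; simpl. ring.
    intros. replace (INR l - INR l) with 0 by ring. rewrite Rmult_0_l, cos_0. auto.
  - set (m := INR j - INR l).
    assert (Hm : m <> 0). { unfold m. intros H. apply n. apply INR_eq. lra. }
    apply RInt_uniqR.
    assert (H := @is_RInt_derive R_CompleteNormedModule (fun x => sin (m * x) / m) (fun x => cos (m * x)) (-PI) PI).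
    replace 0 with (minus (sin (m * PI) / m) (sin (m * - PI) / m)).
    apply H. intros; auto_derive; auto. field; auto.
    intros; apply cont_cos_lin.
    assert (Hk : m = IZR (Z.of_nat j - Z.of_nat l)).
    { unfold m. rewrite minus_IZR, <- !INR_IZR_INZ. auto. }
    rewrite !sin_eq_0_1. unfold minus, plus, opp; simpl. field; auto.
    exists (- (Z.of_nat j - Z.of_nat l))%Z. rewrite opp_IZR, <- Hk. ring.
    exists (Z.of_nat j - Z.of_nat l)%Z. rewrite <- Hk. ring.
Qed.

Lemma int_KN n : RInt (KN n) (-PI) PI = INR n * (2 * PI).
Proof.
  rewrite (RInt_ext _ (fun x => ps (fun j => ps (fun l => cos ((INR j - INR l) * x)) n) n)).
  2: intros; apply KN_expand.
  rewrite (RInt_ps (fun j x => ps (fun l => cos ((INR j - INR l) * x)) n)).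
  2: { intros j x. apply (cont_ps (fun l x => cos ((INR j - INR l) * x))). intros; apply cont_cos_lin. }
  rewrite (ps_ext _ (fun j => 2 * PI)). apply ps_const.
  intros j Hj. rewrite (RInt_ps (fun l x => cos ((INR j - INR l) * x))).
  2: intros; apply cont_cos_lin.
  rewrite (ps_ext _ (fun l => if Nat.eq_dec j l then 2 * PI else 0)).
  apply ps_delta; auto. intros; apply int_cos_m.
Qed.

Lemma RInt_extR (f g : R -> R) a b : (forall x, f x = g x) -> RInt f a b = RInt g a b.
Proof. intros H. apply RInt_ext. intros; apply H. Qed.

Lemma RInt_ChaslesR (f : R -> R) a b c : (forall x, continuous f x) ->
  RInt f a b + RInt f b c = RInt f a c.
Proof. intros H. apply (RInt_Chasles f a b c); apply exRc; auto. Qed.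

Lemma sin_half_sq x : sin (x/2) ^ 2 = (1 - cos x) / 2.
Proof. replace x with (2 * (x/2)) at 2 by field. rewrite cos_2a_sin. simpl; field. Qed.

Lemma cont_bound (phi : R -> R) : (forall x, continuous phi x) ->
  (forall x, 3 * PI / 2 < Rabs x -> phi x = 0) -> exists M, 0 <= M /\ forall x, Rabs (phi x) <= M.
Proof.
  intros Hc Hz.
  destruct (continuity_ab_maj (fun x => Rabs (phi x)) (-(2*PI)) (2*PI)) as [m [Hm _]].
  { pose proof PI_RGT_0; lra. }
  { intros c _. apply continuity_pt_comp with (f1 := phi) (f2 := Rabs).
    apply continuity_pt_filterlim; apply Hc. apply Rcontinuity_abs. }
  exists (Rabs (phi m)). split; [apply Rabs_pos|]. intros x.
  destruct (Rle_dec (Rabs x) (2*PI)).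
  - apply Hm. apply Rabs_le_between; auto.
  - rewrite Hz. rewrite Rabs_R0; apply Rabs_pos.
    pose proof PI_RGT_0; lra.
Qed.

Lemma cos_absR x : cos (Rabs x) = cos x.
Proof. unfold Rabs; destruct Rcase_abs; [apply cos_neg| auto]. Qed.

Section AI.
Variable phi : R -> R.
Hypothesis Hc : forall x, continuous phi x.
Hypothesis Hz : forall x, 3 * PI / 2 < Rabs x -> phi x = 0.

Lemma cont_phiK n x : continuous (fun x => phi x * KN n x) x.
Proof. apply (continuous_mult phi (KN n)); auto. apply cont_KN. Qed.

Lemma outer_bound M n x : (forall x, Rabs (phi x) <= M) -> PI <= Rabs x ->
  Rabs (phi x * KN n x) <= 2 * M.
Proof.
  intros HM Hx. pose proof PI_RGT_0.
  destruct (Rlt_dec (3 * PI / 2) (Rabs x)).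
  - rewrite Hz; auto. rewrite Rmult_0_l, Rabs_R0. pose proof (HM x); pose proof (Rabs_pos (phi x)); lra.
  - assert (Hcos : cos x <= 0).
    { rewrite <- cos_absR. apply cos_le_0; lra. }
    pose proof (KN_bound n x). rewrite sin_half_sq in H0. pose proof (KN_nonneg n x).
    assert (KN n x <= 2) by nra.
    rewrite Rabs_mult, (Rabs_right (KN n x)) by lra.
    pose proof (HM x); pose proof (Rabs_pos (phi x)). nra.
Qed.

Lemma AI eps : 0 < eps -> exists N0, forall n, (N0 <= n)%nat ->
  Rabs (RInt (fun x => phi x * KN n x) (-(2*PI)) (2*PI) / INR n - 2 * PI * phi 0) <= eps.
Proof.
  intros Heps. pose proof PI_RGT_0 as Hpi.
  destruct (cont_bound phi Hc Hz) as [M [HM0 HM]].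
  set (e1 := eps / (4 * PI)).
  assert (He1 : 0 < e1) by (unfold e1; apply Rdiv_lt_0_compat; lra).
  destruct (proj2 (continuity_pt_filterlim phi 0) (Hc 0) e1 He1) as [del [Hdel Hd]].
  assert (Hdel' : forall x, Rabs x < del -> Rabs (phi x - phi 0) < e1).
  { intros x Hx. destruct (Req_dec x 0) as [->|Hx0]. rewrite Rminus_diag, Rabs_R0; auto.
    apply (Hd x). split. split. exact I. auto. simpl. unfold R_dist. rewrite Rminus_0_r. auto. }
  set (d := Rmin del PI).
  assert (Hd0 : 0 < d) by (unfold d; apply Rmin_glb_lt; lra).
  assert (HdP : d <= PI) by apply Rmin_r.
  set (s := (1 - cos d) / 2).
  assert (Hs : 0 < s).
  { unfold s. pose proof (cos_decreasing_1 0 d ltac:(lra) ltac:(lra) ltac:(lra) HdP Hd0). rewrite cos_0 in H. lra. }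
  set (C := 4 * PI * M + 4 * PI * M / s).
  destruct (INR_unbounded (2 * C / eps)) as [N0 HN0].
  exists (S N0). intros n Hn.
  assert (Hn0 : INR N0 < INR n) by (apply lt_INR; lia).
  assert (Hnpos : 0 < INR n) by (pose proof (pos_INR N0); lra).
  assert (HC0 : 0 <= C) by (unfold C; assert (0 <= M / s) by (apply Rdiv_le_0_compat; lra); nra).
  rewrite <- (RInt_ChaslesR _ (-(2*PI)) (-PI)) by apply cont_phiK.
  rewrite <- (RInt_ChaslesR _ (-PI) PI (2*PI)) by apply cont_phiK.
  set (I1 := RInt (fun x => phi x * KN n x) (-(2*PI)) (-PI)).
  set (I2 := RInt (fun x => phi x * KN n x) (-PI) PI).
  set (I3 := RInt (fun x => phi x * KN n x) PI (2*PI)).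
  assert (B1 : Rabs I1 <= PI * (2 * M)).
  { unfold I1. apply Rle_trans with ((-PI - -(2*PI)) * (2*M)); [|right; ring].
    apply abs_RInt_le_const. lra. apply exRc; apply cont_phiK.
    intros t Ht. apply outer_bound; auto. rewrite Rabs_left; lra. }
  assert (B3 : Rabs I3 <= PI * (2 * M)).
  { unfold I3. apply Rle_trans with ((2*PI - PI) * (2*M)); [|right; ring].
    apply abs_RInt_le_const. lra. apply exRc; apply cont_phiK.
    intros t Ht. apply outer_bound; auto. rewrite Rabs_right; lra. }
  assert (E2 : I2 - INR n * (2 * PI) * phi 0 = RInt (fun x => (phi x - phi 0) * KN n x) (-PI) PI).
  { unfold I2. rewrite <- int_KN.
    rewrite (RInt_extR (fun x => (phi x - phi 0) * KN n x) (fun x => phi x * KN n x + (- phi 0) * KN n x))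
      by (intros; ring).
    rewrite RInt_plusR, RInt_scalR. ring.
    apply exRc; apply cont_KN. apply exRc; apply cont_phiK.
    apply exRc; intros; apply (continuous_scal_r (- phi 0) (KN n)); apply cont_KN. }
  assert (B2 : Rabs (I2 - INR n * (2 * PI) * phi 0) <= e1 * (INR n * (2 * PI)) + 2 * PI * (2 * M / s)).
  { rewrite E2.
    assert (Hcg : forall x, continuous (fun x => e1 * KN n x + 2 * M / s) x).
    { intros x. apply (continuous_plus (fun x => e1 * KN n x) (fun _ => 2 * M / s)).
      apply (continuous_scal_r e1 (KN n)); apply cont_KN. apply continuous_const. }
    apply Rle_trans with (RInt (fun x => Rabs ((phi x - phi 0) * KN n x)) (-PI) PI).
    apply abs_RInt_le. lra. apply exRc. intros x.
    apply (continuous_mult (fun x => phi x - phi 0) (KN n)).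
    apply (continuous_minus phi (fun _ => phi 0)); auto. apply continuous_const. apply cont_KN.
    apply Rle_trans with (RInt (fun x => e1 * KN n x + 2 * M / s) (-PI) PI).
    - apply RInt_le. lra.
      apply exRc. intros x. apply (continuous_comp (fun x => (phi x - phi 0) * KN n x) Rabs).
      apply (continuous_mult (fun x => phi x - phi 0) (KN n)).
      apply (continuous_minus phi (fun _ => phi 0)); auto. apply continuous_const. apply cont_KN.
      apply continuous_Rabs.
      apply exRc; auto.
      intros x Hx. pose proof (KN_nonneg n x). rewrite Rabs_mult, (Rabs_right (KN n x)) by lra.
      assert (0 <= 2 * M / s) by (apply Rdiv_le_0_compat; lra).
      destruct (Rlt_dec (Rabs x) del).
      + pose proof (Hdel' x r). nra.
      + assert (Hcx : cos x <= cos d).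
        { rewrite <- cos_absR. destruct (Req_dec (Rabs x) d) as [<-|Hne]. lra.
          assert (Hax: Rabs x <= PI) by (unfold Rabs; destruct Rcase_abs; lra).
          pose proof (Rabs_pos x). assert (d <= del) by apply Rmin_l.
          left. apply cos_decreasing_1; lra. }
        pose proof (KN_bound n x). rewrite sin_half_sq in H1.
        assert (Hk : KN n x <= / s).
        { apply Rmult_le_reg_l with s; auto. rewrite Rinv_r by lra. unfold s in *. nra. }
        assert (Rabs (phi x - phi 0) <= 2 * M).
        { pose proof (Rabs_triang (phi x) (- phi 0)). rewrite Rabs_Ropp in H2.
          pose proof (HM x). pose proof (HM 0). unfold Rminus. lra. }
        apply Rle_trans with (2 * M * / s). 2: { unfold Rdiv; pose proof (KN_nonneg n x). nra. }
        apply Rmult_le_compat; auto. apply Rabs_pos.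
    - rewrite RInt_plusR, RInt_scalR, int_KN, RInt_const. unfold scal; simpl; unfold mult; simpl. lra.
      apply exRc; apply cont_KN. apply exRc; intros; apply (continuous_scal_r e1 (KN n)); apply cont_KN.
      apply exRc; intros; apply continuous_const. }
  replace ((I1 + (I2 + I3)) / INR n - 2 * PI * phi 0) with
     ((I1 + I3 + (I2 - INR n * (2 * PI) * phi 0)) / INR n) by (field; lra).
  unfold Rdiv at 1. rewrite Rabs_mult, (Rabs_right (/ INR n)) by (left; apply Rinv_0_lt_compat; auto).
  apply Rle_trans with ((C + e1 * (INR n * (2 * PI))) * / INR n).
  { apply Rmult_le_compat_r. left; apply Rinv_0_lt_compat; auto.
    pose proof (Rabs_triang (I1 + I3) (I2 - INR n * (2 * PI) * phi 0)).
    pose proof (Rabs_triang I1 I3). unfold C. unfold Rdiv in *. lra. }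
  replace ((C + e1 * (INR n * (2 * PI))) * / INR n) with (C / INR n + eps / 2)
    by (unfold e1; field; lra).
  assert (C / INR n <= eps / 2).
  { apply Rmult_le_reg_r with (INR n); auto. unfold Rdiv; rewrite Rmult_assoc, Rinv_l by lra.
    assert (2 * C / eps * eps = 2 * C) by (field; lra). nra. }
  lra.
Qed.
End AI.

Lemma cesaro (E : nat -> R) : (forall n, 0 <= E n) -> is_lim_seq E 0 ->
  forall eps, 0 < eps -> exists N0, forall n, (N0 <= n)%nat -> ps E n <= eps * INR n.
Proof.
  intros Hp HE eps Heps. apply is_lim_seq_Reals in HE.
  destruct (HE (eps/2) ltac:(lra)) as [N1 HN1].
  set (C1 := ps E N1).
  destruct (INR_unbounded (2 * C1 / eps)) as [N2 HN2].
  exists (max N1 N2). intros n Hn.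
  replace n with (N1 + (n - N1))%nat by lia. rewrite ps_add.
  assert (ps (fun i => E (N1 + i)%nat) (n - N1) <= ps (fun _ => eps/2) (n - N1)).
  { apply ps_le. intros i _. specialize (HN1 (N1 + i)%nat ltac:(lia)). unfold R_dist in HN1.
    rewrite Rminus_0_r in HN1. pose proof (Rle_abs (E (N1 + i)%nat)). lra. }
  rewrite ps_const in H. rewrite plus_INR.
  assert (INR N2 <= INR n) by (apply le_INR; lia).
  assert (INR N1 <= INR n) by (apply le_INR; lia).
  rewrite minus_INR in H by lia.
  assert (2 * C1 / eps * eps = 2 * C1) by (field; lra).
  assert (0 <= C1) by (apply ps_nonneg; auto).
  fold C1. rewrite minus_INR by lia. pose proof (pos_INR N1). nra.
Qed.

Lemma inner_split (a : Z -> R) j N : (j <= N)%nat ->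
  ps (fun l => a (Z.of_nat j - Z.of_nat l)%Z) (S N) =
  ps (fun n => a (Z.of_nat n)) (S j) + ps (fun n => a (- Z.of_nat (S n))%Z) (N - j).
Proof.
  intros H. replace (S N) with (S j + (N - j))%nat by lia. rewrite ps_add. f_equal.
  - rewrite <- ps_rev. apply ps_ext. intros l Hl. f_equal. lia.
  - apply ps_ext. intros i _. f_equal. lia.
Qed.

Lemma lim_ps_of_series (f : nat -> R) s : is_series f s -> is_lim_seq (ps f) s.
Proof.
  intros H. apply lim_of_series in H.
  apply is_lim_seq_incr_1. eapply is_lim_seq_ext; [|exact H].
  intros; simpl; apply sn_ps.
Qed.

Lemma err_lim (f : nat -> R) (s : R) : is_lim_seq (ps f) s -> is_lim_seq (fun n => Rabs (s - ps f n)) 0.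
Proof.
  intros H. apply (proj1 (is_lim_seq_Reals _ _)) in H. apply (proj2 (is_lim_seq_Reals _ _)).
  intros eps He. destruct (H eps He) as [N HN]. exists N. intros n Hn.
  specialize (HN n Hn). unfold R_dist in *. rewrite Rminus_0_r, Rabs_Rabsolu, <- Rabs_Ropp.
  replace (- (s - ps f n)) with (ps f n - s) by ring. auto.
Qed.

Lemma fejer_mean (a : Z -> R) s : zsums a s ->
  is_lim_seq (fun N => ps (fun j => ps (fun l => a (Z.of_nat j - Z.of_nat l)%Z) (S N)) (S N) / INR (S N)) s.
Proof.
  intros [s1 [s2 [H1 [H2 ->]]]].
  set (ap := fun n => a (Z.of_nat n)) in *. set (am := fun n => a (- Z.of_nat (S n))%Z) in *.
  set (E1 := fun n => Rabs (s1 - ps ap n)). set (E2 := fun n => Rabs (s2 - ps am n)).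
  assert (L1 : is_lim_seq E1 0) by (apply err_lim, lim_ps_of_series; auto).
  assert (L2 : is_lim_seq E2 0) by (apply err_lim, lim_ps_of_series; auto).
  apply is_lim_seq_Reals. intros eps Heps.
  destruct (cesaro E1 (fun _ => Rabs_pos _) L1 (eps/4) ltac:(lra)) as [Na HNa].
  destruct (cesaro E2 (fun _ => Rabs_pos _) L2 (eps/4) ltac:(lra)) as [Nb HNb].
  exists (max Na Nb). intros N HN. unfold R_dist.
  set (n := S N).
  assert (Hn : 0 < INR n) by (apply lt_0_INR; unfold n; lia).
  assert (Eq : ps (fun j => ps (fun l => a (Z.of_nat j - Z.of_nat l)%Z) n) n / INR n - (s1 + s2)
     = ps (fun j => (ps ap (S j) - s1) + (ps am (N - j) - s2)) n / INR n).
  { rewrite (ps_ext (fun j => ps (fun l => a (Z.of_nat j - Z.of_nat l)%Z) n)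
                   (fun j => ps ap (S j) + ps am (N - j))).
    2: { intros j Hj. unfold n. apply inner_split. unfold n in Hj. lia. }
    rewrite (ps_ext (fun j => (ps ap (S j) - s1) + (ps am (N - j) - s2))
                    (fun j => (ps ap (S j) + ps am (N - j)) + (-(s1+s2)))) by (intros; ring).
    rewrite (ps_plus (fun j => ps ap (S j) + ps am (N - j)) (fun _ => -(s1+s2))), ps_const. field; lra. }
  rewrite Eq. unfold Rdiv. rewrite Rabs_mult, (Rabs_right (/ INR n)) by (left; apply Rinv_0_lt_compat; auto).
  apply Rle_lt_trans with ((ps E1 (S n) + ps E2 n) * / INR n).
  { apply Rmult_le_compat_r. left; apply Rinv_0_lt_compat; auto.
    eapply Rle_trans. apply ps_abs.
    rewrite ps_shift.
    replace (ps E2 n) with (ps (fun j => E2 (n - 1 - j)%nat) n) by apply ps_rev.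
    rewrite Rplus_assoc, <- ps_plus.
    assert (0 <= E1 0%nat) by apply Rabs_pos.
    enough (ps (fun i => Rabs (ps ap (S i) - s1 + (ps am (N - i) - s2))) n <=
            ps (fun i => E1 (S i) + E2 (n - 1 - i)%nat) n) by lra.
    apply ps_le. intros j Hj. unfold E1, E2.
    replace (n - 1 - j)%nat with (N - j)%nat by (unfold n; lia).
    rewrite <- (Rabs_Ropp (s1 - _)), <- (Rabs_Ropp (s2 - _)).
    replace (- (s1 - ps ap (S j))) with (ps ap (S j) - s1) by ring.
    replace (- (s2 - ps am (N - j))) with (ps am (N - j) - s2) by ring.
    apply Rabs_triang. }
  assert (A1 : ps E1 (S n) <= eps / 4 * INR (S n)) by (apply HNa; unfold n; lia).
  assert (A2 : ps E2 n <= eps / 4 * INR n) by (apply HNb; unfold n; lia).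
  rewrite S_INR in A1.
  assert (INR n >= 1) by (unfold n; rewrite S_INR; pose proof (pos_INR N); lra).
  apply Rle_lt_trans with ((eps / 4 * (INR n + 1) + eps / 4 * INR n) * / INR n).
  apply Rmult_le_compat_r. left; apply Rinv_0_lt_compat; auto. lra.
  replace ((eps / 4 * (INR n + 1) + eps / 4 * INR n) * / INR n) with (eps / 2 + eps / 4 / INR n) by (field; lra).
  assert (eps / 4 / INR n <= eps / 4).
  { unfold Rdiv. apply Rmult_le_reg_r with (INR n); auto. rewrite Rmult_assoc, Rinv_l by lra. nra. }
  lra.
Qed.

Lemma trig_cos y x j l : cos (y - (INR j - INR l) * x) =
  cos y * (cos (INR j * x) * cos (INR l * x) + sin (INR j * x) * sin (INR l * x)) +
  sin y * (sin (INR j * x) * cos (INR l * x) - cos (INR j * x) * sin (INR l * x)).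
Proof.
  replace ((INR j - INR l) * x) with (INR j * x - INR l * x) by ring.
  rewrite cos_minus, sin_minus, cos_minus. ring.
Qed.
Lemma trig_sin y x j l : sin (y - (INR j - INR l) * x) =
  sin y * (cos (INR j * x) * cos (INR l * x) + sin (INR j * x) * sin (INR l * x)) -
  cos y * (sin (INR j * x) * cos (INR l * x) - cos (INR j * x) * sin (INR l * x)).
Proof.
  replace ((INR j - INR l) * x) with (INR j * x - INR l * x) by ring.
  rewrite sin_minus, sin_minus, cos_minus. ring.
Qed.



Lemma dsum_cos y x n : ps (fun j => ps (fun l => cos (y - (INR j - INR l) * x)) n) n = cos y * KN n x.
Proof.
  rewrite (ps_ext _ (fun j => ps (fun l => cos y * (cos (INR j * x) * cos (INR l * x)) +
       cos y * (sin (INR j * x) * sin (INR l * x)) +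
       (sin y * (sin (INR j * x) * cos (INR l * x)) + (- sin y) * (cos (INR j * x) * sin (INR l * x)))) n)).
  2: { intros j _. apply ps_ext. intros l _. rewrite trig_cos. ring. }
  rewrite (ps_ext _ (fun j => cos y * ps (fun l => cos (INR j * x) * cos (INR l * x)) n +
      cos y * ps (fun l => sin (INR j * x) * sin (INR l * x)) n +
      (sin y * ps (fun l => sin (INR j * x) * cos (INR l * x)) n +
       (- sin y) * ps (fun l => cos (INR j * x) * sin (INR l * x)) n))).
  2: { intros j _. rewrite !ps_plus, !ps_scal. ring. }
  rewrite !ps_plus, !ps_scal, <- !ps_prod. unfold KN, CS, SS. simpl. ring.
Qed.

Lemma dsum_sin y x n : ps (fun j => ps (fun l => sin (y - (INR j - INR l) * x)) n) n = sin y * KN n x.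
Proof.
  rewrite (ps_ext _ (fun j => ps (fun l => sin y * (cos (INR j * x) * cos (INR l * x)) +
       sin y * (sin (INR j * x) * sin (INR l * x)) +
       ((- cos y) * (sin (INR j * x) * cos (INR l * x)) + cos y * (cos (INR j * x) * sin (INR l * x)))) n)).
  2: { intros j _. apply ps_ext. intros l _. rewrite trig_sin. ring. }
  rewrite (ps_ext _ (fun j => sin y * ps (fun l => cos (INR j * x) * cos (INR l * x)) n +
      sin y * ps (fun l => sin (INR j * x) * sin (INR l * x)) n +
      ((- cos y) * ps (fun l => sin (INR j * x) * cos (INR l * x)) n +
       cos y * ps (fun l => cos (INR j * x) * sin (INR l * x)) n))).
  2: { intros j _. rewrite !ps_plus, !ps_scal. ring. }
  rewrite !ps_plus, !ps_scal, <- !ps_prod. unfold KN, CS, SS. simpl. ring.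
Qed.

Lemma izr_diff j l : IZR (Z.of_nat j - Z.of_nat l) = INR j - INR l.
Proof. rewrite minus_IZR, <- !INR_IZR_INZ. auto. Qed.

Section Poisson.
Variable h : R -> R.
Hypothesis hc : forall x, continuous h x.
Hypothesis hz : forall x, 3 * PI / 2 < Rabs x -> h x = 0.

Lemma cont_hcos c x : continuous (fun x => h x * cos (x * c)) x.
Proof. apply (continuous_mult h (fun x => cos (x*c))); auto.
  apply (@ex_derive_continuous R_AbsRing R_NormedModule). auto_derive. auto. Qed.
Lemma cont_hsin c x : continuous (fun x => h x * sin (x * c)) x.
Proof. apply (continuous_mult h (fun x => sin (x*c))); auto.
  apply (@ex_derive_continuous R_AbsRing R_NormedModule). auto_derive. auto. Qed.

Lemma FT_re_eq e : FT_re h (2*PI) e = / (2*PI) * RInt (fun x => h x * cos (x * e)) (-(2*PI)) (2*PI).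
Proof. unfold FT_re. rewrite bridge; auto. intros; apply cont_hcos. Qed.
Lemma FT_im_eq e : FT_im h (2*PI) e = - (/ (2*PI) * RInt (fun x => h x * sin (x * e)) (-(2*PI)) (2*PI)).
Proof. unfold FT_im. rewrite bridge; auto. intros; apply cont_hsin. Qed.

Lemma G_re xi n : ps (fun j => ps (fun l => FT_re h (2*PI) (xi - IZR (Z.of_nat j - Z.of_nat l))) n) n
   = / (2*PI) * RInt (fun x => (h x * cos (x * xi)) * KN n x) (-(2*PI)) (2*PI).
Proof.
  rewrite (ps_ext _ (fun j => / (2*PI) * ps (fun l => RInt (fun x => h x * cos (x * (xi - (INR j - INR l)))) (-(2*PI)) (2*PI)) n)).
  2: { intros j _. rewrite <- ps_scal. apply ps_ext. intros l _. rewrite FT_re_eq, izr_diff. auto. }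
  rewrite ps_scal. f_equal.
  rewrite (ps_ext _ (fun j => RInt (fun x => ps (fun l => h x * cos (x * (xi - (INR j - INR l)))) n) (-(2*PI)) (2*PI))).
  2: { intros j _. rewrite (RInt_ps (fun l x => h x * cos (x * (xi - (INR j - INR l))))); auto.
       intros; apply cont_hcos. }
  rewrite <- (RInt_ps (fun j x => ps (fun l => h x * cos (x * (xi - (INR j - INR l)))) n)).
  2: { intros j x. apply (cont_ps (fun l x => h x * cos (x * (xi - (INR j - INR l))))). intros; apply cont_hcos. }
  apply RInt_extR. intros x.
  rewrite (ps_ext _ (fun j => h x * ps (fun l => cos (x * xi - (INR j - INR l) * x)) n)).
  rewrite ps_scal, dsum_cos. ring.
  intros j _. rewrite <- ps_scal. apply ps_ext. intros l _. f_equal. f_equal. ring.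
Qed.

Lemma G_im xi n : ps (fun j => ps (fun l => FT_im h (2*PI) (xi - IZR (Z.of_nat j - Z.of_nat l))) n) n
   = - (/ (2*PI) * RInt (fun x => (h x * sin (x * xi)) * KN n x) (-(2*PI)) (2*PI)).
Proof.
  rewrite (ps_ext _ (fun j => - / (2*PI) * ps (fun l => RInt (fun x => h x * sin (x * (xi - (INR j - INR l)))) (-(2*PI)) (2*PI)) n)).
  2: { intros j _. rewrite <- ps_scal. apply ps_ext. intros l _. rewrite FT_im_eq, izr_diff. ring. }
  rewrite ps_scal. rewrite <- (Ropp_mult_distr_l (/ (2*PI))). f_equal. f_equal.
  rewrite (ps_ext _ (fun j => RInt (fun x => ps (fun l => h x * sin (x * (xi - (INR j - INR l)))) n) (-(2*PI)) (2*PI))).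
  2: { intros j _. rewrite (RInt_ps (fun l x => h x * sin (x * (xi - (INR j - INR l))))); auto.
       intros; apply cont_hsin. }
  rewrite <- (RInt_ps (fun j x => ps (fun l => h x * sin (x * (xi - (INR j - INR l)))) n)).
  2: { intros j x. apply (cont_ps (fun l x => h x * sin (x * (xi - (INR j - INR l))))). intros; apply cont_hsin. }
  apply RInt_extR. intros x.
  rewrite (ps_ext _ (fun j => h x * ps (fun l => sin (x * xi - (INR j - INR l) * x)) n)).
  rewrite ps_scal, dsum_sin. ring.
  intros j _. rewrite <- ps_scal. apply ps_ext. intros l _. f_equal. f_equal. ring.
Qed.

Lemma AI_lim (phi : R -> R) : (forall x, continuous phi x) -> (forall x, 3 * PI / 2 < Rabs x -> phi x = 0) ->
  is_lim_seq (fun N => / (2*PI) * RInt (fun x => phi x * KN (S N) x) (-(2*PI)) (2*PI) / INR (S N)) (phi 0).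
Proof.
  intros Hc Hz. apply (proj2 (is_lim_seq_Reals _ _)). intros eps Heps.
  pose proof PI_RGT_0.
  destruct (AI phi Hc Hz (eps * PI) ltac:(nra)) as [N0 HN0].
  exists N0. intros N HN. unfold R_dist.
  specialize (HN0 (S N) ltac:(lia)).
  replace (/ (2*PI) * RInt (fun x => phi x * KN (S N) x) (-(2*PI)) (2*PI) / INR (S N) - phi 0) with
    (/ (2*PI) * (RInt (fun x => phi x * KN (S N) x) (-(2*PI)) (2*PI) / INR (S N) - 2 * PI * phi 0)).
  2: { field. repeat split; try lra; apply not_0_INR; lia. }
  rewrite Rabs_mult, Rabs_right by (left; apply Rinv_0_lt_compat; lra).
  apply Rle_lt_trans with (/ (2*PI) * (eps * PI)).
  apply Rmult_le_compat_l; auto. left; apply Rinv_0_lt_compat; lra.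
  replace (/ (2*PI) * (eps * PI)) with (eps / 2) by (field; lra). lra.
Qed.

Lemma poisson_re xi s : zsums (fun k => FT_re h (2*PI) (xi - IZR k)) s -> s = h 0.
Proof.
  intros Hs. pose proof (fejer_mean _ _ Hs) as L1.
  assert (L2 : is_lim_seq (fun N => / (2*PI) * RInt (fun x => (h x * cos (x * xi)) * KN (S N) x) (-(2*PI)) (2*PI) / INR (S N))
       (h 0 * cos (0 * xi))).
  { apply (AI_lim (fun x => h x * cos (x * xi))). intros; apply cont_hcos.
    intros x Hx. rewrite hz; auto; ring. }
  rewrite Rmult_0_l, cos_0, Rmult_1_r in L2.
  eapply is_lim_seq_ext in L2. 2: { intros N. rewrite <- G_re. reflexivity. }
  apply is_lim_seq_unique in L1, L2. rewrite L1 in L2. injection L2; auto.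
Qed.

Lemma poisson_im xi s : zsums (fun k => FT_im h (2*PI) (xi - IZR k)) s -> s = 0.
Proof.
  intros Hs. pose proof (fejer_mean _ _ Hs) as L1.
  assert (L2 : is_lim_seq (fun N => / (2*PI) * RInt (fun x => (h x * sin (x * xi)) * KN (S N) x) (-(2*PI)) (2*PI) / INR (S N))
       (h 0 * sin (0 * xi))).
  { apply (AI_lim (fun x => h x * sin (x * xi))). intros; apply cont_hsin.
    intros x Hx. rewrite hz; auto; ring. }
  rewrite Rmult_0_l, sin_0, Rmult_0_r in L2.
  assert (L3 : is_lim_seq (fun N => ps (fun j => ps (fun l =>
        (fun k : Z => FT_im h (2 * PI) (xi - IZR k)) (Z.of_nat j - Z.of_nat l)%Z) (S N)) (S N) / INR (S N)) 0).
  { apply is_lim_seq_ext with (fun N => - (/ (2*PI) * RInt (fun x => (h x * sin (x * xi)) * KN (S N) x) (-(2*PI)) (2*PI) / INR (S N))).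
    - intros N. cbv beta. rewrite G_im. field. pose proof PI_RGT_0. repeat split; try lra; apply not_0_INR; lia.
    - replace (Finite 0) with (Rbar_opp (Finite 0)) by (simpl; f_equal; ring). apply (proj1 (is_lim_seq_opp _ _)). exact L2. }
  apply is_lim_seq_unique in L1, L3. rewrite L1 in L3. injection L3; auto.
Qed.
End Poisson.

Lemma Rpower_pos x y : 0 < Rpower x y.
Proof. unfold Rpower; apply exp_pos. Qed.

Lemma RP1 x q : 1 <= x -> 0 <= q -> Rpower x (- q) <= 1.
Proof.
  intros Hx Hq. rewrite Rpower_Ropp.
  assert (1 <= Rpower x q) by (rewrite <- (Rpower_O x) by lra; apply Rle_Rpower; lra).
  rewrite <- Rinv_1. apply Rinv_le_contravar; lra.
Qed.

Lemma RP2 a b q : 0 < a <= b -> 0 <= q -> Rpower b (- q) <= Rpower a (- q).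
Proof.
  intros Hab Hq. rewrite !Rpower_Ropp. apply Rinv_le_contravar. apply Rpower_pos.
  apply Rle_Rpower_l; auto.
Qed.

Lemma RP3 p a b c : 0 < p -> 0 < c -> c <= a -> c <= b ->
  Rabs (Rpower a (- p) - Rpower b (- p)) <= p * Rpower c (- p - 1) * Rabs (a - b).
Proof.
  intros Hp Hc Ha Hb.
  assert (Gen : forall a b, c <= a -> a < b ->
     Rabs (Rpower a (- p) - Rpower b (- p)) <= p * Rpower c (- p - 1) * Rabs (a - b)).
  { clear a b Ha Hb. intros a b Ha Hab.
    destruct (MVT_cor2 (fun t => Rpower t (- p)) (fun t => - p * Rpower t (- p - 1)) a b Hab) as [t [Ht Ht2]].
    { intros t Ht. apply derivable_pt_lim_power. lra. }
    rewrite <- Rabs_Ropp. replace (- (Rpower a (- p) - Rpower b (- p))) with (Rpower b (- p) - Rpower a (- p)) by ring.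
    rewrite Ht. rewrite Rabs_mult. rewrite (Rabs_left1 (a - b)) by lra. rewrite (Rabs_right (b - a)) by lra.
    replace (- (a - b)) with (b - a) by ring.
    apply Rmult_le_compat_r. lra.
    rewrite Rabs_mult, Rabs_Ropp, (Rabs_right p) by lra. rewrite Rabs_right by (left; apply Rpower_pos).
    apply Rmult_le_compat_l. lra.
    replace (- p - 1) with (- (p + 1)) by ring. apply RP2; lra. }
  destruct (Rtotal_order a b) as [H|[H|H]].
  - apply Gen; auto.
  - subst. rewrite !Rminus_diag, Rabs_R0. rewrite Rmult_0_r. lra.
  - rewrite <- Rabs_Ropp, (Rabs_minus_sym a b). replace (- (Rpower a (- p) - Rpower b (- p))) with (Rpower b (- p) - Rpower a (- p)) by ring.
    apply Gen; auto.
Qed.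

Lemma dcoef_sym p dp dm k : dcoef p dp dm k = dcoef p dm dp (- k).
Proof. unfold dcoef. destruct k; reflexivity. Qed.

Lemma delta_sym p dp dm X : delta p dp dm X = delta p dm dp (- X).
Proof.
  unfold delta. destruct (Rlt_dec 0 X); destruct (Rlt_dec 0 (-X)); try lra.
  - destruct (Rlt_dec (-X) 0); try lra. rewrite Ropp_involutive. auto.
  - destruct (Rlt_dec X 0); try lra. auto.
  - destruct (Rlt_dec X 0); destruct (Rlt_dec (-X) 0); try lra; auto.
Qed.

Lemma dcoef_bound p dp dm k : 0 < p -> Rabs (dcoef p dp dm k) <= Rabs dp + Rabs dm.
Proof.
  intros Hp. pose proof (Rabs_pos dp); pose proof (Rabs_pos dm).
  unfold dcoef. destruct (0 <? k)%Z eqn:E1.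
  - apply Z.ltb_lt in E1. rewrite Rabs_mult, (Rabs_right (Rpower _ _)) by (left; apply Rpower_pos).
    assert (Rpower (IZR k) (- p) <= 1) by (apply RP1; [apply IZR_le; lia| lra]).
    pose proof (Rpower_pos (IZR k) (-p)). nra.
  - destruct (k <? 0)%Z eqn:E2.
    + apply Z.ltb_lt in E2. rewrite Rabs_mult, (Rabs_right (Rpower _ _)) by (left; apply Rpower_pos).
      assert (Rpower (IZR (-k)) (- p) <= 1) by (apply RP1; [apply IZR_le; lia| lra]).
      pose proof (Rpower_pos (IZR (-k)) (-p)). nra.
    + rewrite Rabs_R0; lra.
Qed.

Definition cfun (p S : R) (m : nat) (X : R) :=
  S * p * Rpower (X / 2) (- p - 1) + 2 * S / (1 + X / 2) ^ m.

Lemma W1 m y : (1 <= m)%nat -> Rabs y * / (1 + Rabs y) ^ (m + 2) <= / (1 + Rabs y) ^ 2.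
Proof.
  intros Hm. pose proof (Rabs_pos y). set (t := Rabs y) in *.
  assert (Hp : (1 + t) ^ (m + 2) = (1 + t) ^ m * (1 + t) ^ 2) by (rewrite pow_add; auto).
  assert (Hm1 : 1 + t <= (1 + t) ^ m).
  { destruct m; [lia|]. simpl. pose proof (pow_R1_Rle (1+t) m ltac:(lra)). nra. }
  assert (P2 : 0 < (1 + t) ^ 2) by (apply pow_lt; lra).
  rewrite Hp, Rinv_mult.
  assert (t * / (1 + t) ^ m <= 1).
  { apply Rmult_le_reg_r with ((1 + t) ^ m). lra.
    rewrite Rmult_assoc, Rinv_l by lra. lra. }
  pose proof (Rinv_0_lt_compat _ P2). nra.
Qed.

Lemma W2 m y X : 0 <= X -> X / 2 <= Rabs y ->
  / (1 + Rabs y) ^ (m + 2) <= / (1 + X / 2) ^ m * / (1 + Rabs y) ^ 2.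
Proof.
  intros HX Hy. pose proof (Rabs_pos y).
  rewrite pow_add, Rinv_mult. apply Rmult_le_compat_r.
  left; apply Rinv_0_lt_compat, pow_lt; lra.
  apply Rinv_le_contravar. apply pow_lt; lra. apply pow_incr; lra.
Qed.

Lemma per_term_pos p dp dm S m X k : 0 < p -> (1 <= m)%nat -> Rabs dp + Rabs dm <= S -> 2 <= X ->
  Rabs (dcoef p dp dm k - delta p dp dm X) * / (1 + Rabs (X - IZR k)) ^ (m + 2)
    <= cfun p S m X * vw (X - IZR k).
Proof.
  intros Hp Hm HS HX. unfold cfun, vw.
  set (y := X - IZR k). pose proof (Rabs_pos y) as Hy.
  pose proof (Rabs_pos dp); pose proof (Rabs_pos dm).
  assert (Hdel : delta p dp dm X = dp * Rpower X (- p)).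
  { unfold delta. destruct (Rlt_dec 0 X); [auto| lra]. }
  assert (Hc1 : 0 <= S * p * Rpower (X / 2) (- p - 1)).
  { pose proof (Rpower_pos (X/2) (-p-1)). apply Rmult_le_pos; nra. }
  assert (Hc2 : 0 <= 2 * S / (1 + X / 2) ^ m).
  { apply Rdiv_le_0_compat. lra. apply pow_lt; lra. }
  assert (Hw : 0 <= / (1 + Rabs y) ^ (m + 2)) by (left; apply Rinv_0_lt_compat, pow_lt; lra).
  assert (Hv : 0 <= / (1 + Rabs y) ^ 2) by (left; apply Rinv_0_lt_compat, pow_lt; lra).
  destruct (Rlt_dec (X / 2) (IZR k)) as [Hk|Hk].
  - assert (Hk0 : (0 < k)%Z) by (apply lt_IZR; lra).
    assert (Hd : dcoef p dp dm k = dp * Rpower (IZR k) (- p)).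
    { unfold dcoef. apply Z.ltb_lt in Hk0. rewrite Hk0. auto. }
    rewrite Hd, Hdel.
    replace (dp * Rpower (IZR k) (- p) - dp * Rpower X (- p)) with (dp * (Rpower (IZR k) (- p) - Rpower X (- p))) by ring.
    rewrite Rabs_mult.
    pose proof (RP3 p (IZR k) X (X/2) Hp ltac:(lra) ltac:(lra) ltac:(lra)) as HM.
    rewrite (Rabs_minus_sym (IZR k) X) in HM. fold y in HM.
    pose proof (W1 m y Hm).
    set (R0 := Rpower (X / 2) (- p - 1)) in *.
    pose proof (Rpower_pos (X / 2) (- p - 1)). fold R0 in H2.
    apply Rle_trans with (S * p * R0 * (Rabs y * / (1 + Rabs y) ^ (m + 2))).
    + apply Rle_trans with (Rabs dp * (p * R0 * Rabs y) * / (1 + Rabs y) ^ (m + 2)).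
      apply Rmult_le_compat_r; auto. apply Rmult_le_compat_l; auto.
      assert (0 <= p * R0 * Rabs y) by (apply Rmult_le_pos; nra).
      assert (Rabs dp <= S) by lra.
      assert (0 <= Rabs y * / (1 + Rabs y) ^ (m + 2)) by nra.
      replace (Rabs dp * (p * R0 * Rabs y) * / (1 + Rabs y) ^ (m + 2)) with
        (Rabs dp * (p * R0) * (Rabs y * / (1 + Rabs y) ^ (m + 2))) by ring.
      apply Rmult_le_compat_r; auto. rewrite (Rmult_assoc S p R0). apply Rmult_le_compat_r; [apply Rmult_le_pos; lra| lra].
    + nra.
  - assert (Hfar : X / 2 <= Rabs y).
    { unfold y. rewrite Rabs_right; lra. }
    pose proof (W2 m y X ltac:(lra) Hfar).
    assert (Hb : Rabs (dcoef p dp dm k - delta p dp dm X) <= 2 * S).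
    { rewrite Hdel. pose proof (Rabs_triang (dcoef p dp dm k) (- (dp * Rpower X (- p)))).
      rewrite Rabs_Ropp, Rabs_mult in H2. rewrite (Rabs_right (Rpower _ _)) in H2 by (left; apply Rpower_pos).
      pose proof (dcoef_bound p dp dm k Hp).
      assert (Rpower X (- p) <= 1) by (apply RP1; lra).
      pose proof (Rpower_pos X (-p)). unfold Rminus. nra. }
    apply Rle_trans with (2 * S * (/ (1 + X / 2) ^ m * / (1 + Rabs y) ^ 2)).
    apply Rmult_le_compat; auto. apply Rabs_pos.
    unfold Rdiv. nra.
Qed.

Lemma per_term p dp dm S m X k : 0 < p -> (1 <= m)%nat -> Rabs dp + Rabs dm <= S -> 2 <= Rabs X ->
  Rabs (dcoef p dp dm k - delta p dp dm X) * / (1 + Rabs (X - IZR k)) ^ (m + 2)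
    <= cfun p S m (Rabs X) * vw (X - IZR k).
Proof.
  intros Hp Hm HS HX. destruct (Rle_dec 0 X).
  - assert (E : Rabs X = X) by (apply Rabs_right; lra). rewrite E in *. apply per_term_pos; auto.
  - assert (E : Rabs X = - X) by (apply Rabs_left; lra). rewrite E in *.
    rewrite dcoef_sym, delta_sym.
    replace (X - IZR k) with (- (- X - IZR (- k))) by (rewrite opp_IZR; ring).
    unfold vw. rewrite Rabs_Ropp. apply per_term_pos; auto. lra.
Qed.

Lemma cfun_small p S m X : 0 < p -> p + 1 <= INR m -> 0 <= S -> 2 <= X ->
  cfun p S m X <= (S * p * Rpower (/2) (- p - 1) + 2 * S * 2 ^ m) * (Rpower X (- p) / X).
Proof.
  intros Hp Hm HS HX. unfold cfun.
  assert (E1 : Rpower (X / 2) (- p - 1) = Rpower (/2) (- p - 1) * (Rpower X (- p) / X)).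
  { unfold Rdiv. rewrite <- Rpower_mult_distr by lra.
    replace (- p - 1) with (- p + - (1)) by ring. rewrite Rpower_plus, (Rpower_Ropp X 1), Rpower_1 by lra. ring. }
  rewrite E1.
  assert (E2 : 2 * S / (1 + X / 2) ^ m <= 2 * S * 2 ^ m * (Rpower X (- p) / X)).
  { assert (HXm : Rpower X p * X <= X ^ m).
    { rewrite <- Rpower_pow by lra. rewrite <- (Rpower_1 X) at 2 by lra. rewrite <- Rpower_plus.
      apply Rle_Rpower; lra. }
    assert (H1 : (X / 2) ^ m <= (1 + X / 2) ^ m) by (apply pow_incr; lra).
    assert (H2 : (X/2) ^ m = X ^ m / 2 ^ m) by (unfold Rdiv; rewrite Rpow_mult_distr, pow_inv; auto).
    pose proof (Rpower_pos X p).
    assert (H3 : 0 < 2 ^ m) by (apply pow_lt; lra).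
    assert (H4 : 0 < X ^ m) by (apply pow_lt; lra).
    rewrite Rpower_Ropp. unfold Rdiv.
    apply Rle_trans with (2 * S * / (X ^ m / 2 ^ m)).
    - apply Rmult_le_compat_l. lra. apply Rinv_le_contravar. apply Rdiv_lt_0_compat; lra. lra.
    - replace (2 * S * / (X ^ m / 2 ^ m)) with (2 * S * 2 ^ m * / X ^ m) by (field; lra).
      apply Rmult_le_compat_l. apply Rmult_le_pos; [lra| lra].
      rewrite <- Rinv_mult. apply Rinv_le_contravar. apply Rmult_lt_0_compat; lra. lra. }
  pose proof (Rpower_pos (/2) (-p-1)). lra.
Qed.

Lemma zsums_ext f g s : (forall k, f k = g k) -> zsums f s -> zsums g s.
Proof.
  intros H [s1 [s2 [H1 [H2 ->]]]]. exists s1, s2. split; [|split; auto].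
  eapply is_series_ext; [|exact H1]. intros; simpl; auto.
  eapply is_series_ext; [|exact H2]. intros; simpl; auto.
Qed.

Lemma w_le_vw m y : / (1 + Rabs y) ^ (m + 2) <= vw y.
Proof.
  unfold vw. pose proof (Rabs_pos y). apply Rinv_le_contravar. apply pow_lt; lra.
  rewrite pow_add. pose proof (pow_R1_Rle (1 + Rabs y) m ltac:(lra)).
  assert (0 < (1 + Rabs y) ^ 2) by (apply pow_lt; lra). nra.
Qed.

Lemma sqrt_sum_le a b : sqrt (Rsqr a + Rsqr b) <= Rabs a + Rabs b.
Proof.
  rewrite <- (sqrt_Rsqr (Rabs a + Rabs b)) by (pose proof (Rabs_pos a); pose proof (Rabs_pos b); lra).
  apply sqrt_le_1_alt. rewrite (Rsqr_abs a), (Rsqr_abs b). unfold Rsqr.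
  pose proof (Rabs_pos a); pose proof (Rabs_pos b). nra.
Qed.

Theorem mainTheorem3 (p dp dm : R) (h0 zeta : R -> R) :
  1/2 < p ->
  smooth h0 ->
  (forall x, - PI <= x <= PI -> h0 x = 1) ->
  (forall x, 3 * PI / 2 < Rabs x -> h0 x = 0) ->
  smooth zeta ->
  (exists r, 0 < r /\ forall x, Rabs x < r -> zeta x = 0) ->
  (exists M, forall x, M < Rabs x -> zeta x = 1) ->
  forall eps, 0 < eps ->
    exists M, forall xi, M < Rabs xi ->
      sqrt (Rsqr (D1_hat_re p dp dm h0 zeta xi) + Rsqr (D1_hat_im p dp dm h0 zeta xi))
        <= eps * Rpower (Rabs xi) (- p).
Proof.
  intros Hp [D [HD0 HD]] Hh1 Hh0 _ _ [Mz Hz] eps Heps.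
  assert (Hp0 : 0 < p) by lra. pose proof PI_RGT_0 as Hpi. pose proof PI2_1.
  assert (HDz : forall x, 3 * PI / 2 < Rabs x -> D 0%nat x = 0) by (intros; rewrite HD0; auto).
  assert (hc : forall x, continuous h0 x).
  { intros x. apply (continuous_ext (D 0%nat)); auto. apply D_cont; auto. }
  destruct (INR_unbounded (p + 1)) as [m Hm].
  assert (Hm1 : (1 <= m)%nat).
  { destruct m; [simpl in Hm; lra| lia]. }
  destruct (Ic_decay D HD HDz (m + 2)) as [K [HK HKd]].
  assert (Hre : forall e, Rabs (FT_re h0 (2*PI) e) <= K * / (1 + Rabs e) ^ (m + 2)).
  { intros e. rewrite FT_re_eq by auto.
    rewrite (RInt_extR _ (fun x => D 0%nat x * cos (x * e))) by (intros; rewrite HD0; auto).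
    destruct (HKd e) as [H1 _]. unfold Ic in H1.
    rewrite Rabs_mult, Rabs_right by (left; apply Rinv_0_lt_compat; lra).
    assert (/ (2 * PI) <= 1) by (rewrite <- Rinv_1; apply Rinv_le_contravar; lra).
    pose proof (Rabs_pos (RInt (fun x => D 0%nat x * cos (x * e)) (- (2 * PI)) (2 * PI))).
    apply Rle_trans with (1 * Rabs (RInt (fun x => D 0%nat x * cos (x * e)) (- (2 * PI)) (2 * PI))).
    apply Rmult_le_compat_r; auto. rewrite Rmult_1_l. exact H1. }
  assert (Him : forall e, Rabs (FT_im h0 (2*PI) e) <= K * / (1 + Rabs e) ^ (m + 2)).
  { intros e. rewrite FT_im_eq by auto. rewrite Rabs_Ropp.
    rewrite (RInt_extR _ (fun x => D 0%nat x * sin (x * e))) by (intros; rewrite HD0; auto).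
    destruct (HKd e) as [_ H1]. unfold Is in H1.
    rewrite Rabs_mult, Rabs_right by (left; apply Rinv_0_lt_compat; lra).
    assert (/ (2 * PI) <= 1) by (rewrite <- Rinv_1; apply Rinv_le_contravar; lra).
    pose proof (Rabs_pos (RInt (fun x => D 0%nat x * sin (x * e)) (- (2 * PI)) (2 * PI))).
    apply Rle_trans with (1 * Rabs (RInt (fun x => D 0%nat x * sin (x * e)) (- (2 * PI)) (2 * PI))).
    apply Rmult_le_compat_r; auto. rewrite Rmult_1_l. exact H1. }
  set (S := Rabs dp + Rabs dm).
  assert (HS : 0 <= S) by (unfold S; pose proof (Rabs_pos dp); pose proof (Rabs_pos dm); lra).
  set (A0 := S * p * Rpower (/2) (- p - 1) + 2 * S * 2 ^ m).
  assert (HA0 : 0 <= A0).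
  { unfold A0. pose proof (Rpower_pos (/2) (-p-1)). pose proof (pow_lt 2 m ltac:(lra)).
    assert (0 <= S * p) by nra. nra. }
  exists (2 + Rabs Mz + 8 * PI * K * A0 / eps).
  intros xi Hxi.
  assert (HQ : 0 <= 8 * PI * K * A0 / eps).
  { apply Rdiv_le_0_compat; [|lra]. apply Rmult_le_pos; [|lra]. apply Rmult_le_pos; [|lra]. lra. }
  pose proof (Rle_abs Mz). pose proof (Rabs_pos Mz).
  set (X := Rabs xi) in *.
  assert (HX2 : 2 <= X) by lra.
  assert (Hzeta : zeta xi = 1) by (apply Hz; unfold X in Hxi; lra).
  destruct (wsum xi) as [sv [Hsv Hsv4]].
  set (c := cfun p S m X).
  assert (Hc0 : 0 <= c).
  { unfold c, cfun. pose proof (Rpower_pos (X/2) (-p-1)).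
    assert (0 < (1 + X/2)^m) by (apply pow_lt; lra).
    assert (0 <= 2 * S / (1 + X / 2) ^ m) by (apply Rdiv_le_0_compat; lra).
    assert (0 <= S * p) by nra. nra. }
  assert (Hpt : forall k, Rabs (dcoef p dp dm k - delta p dp dm xi) * / (1 + Rabs (xi - IZR k)) ^ (m + 2)
                  <= c * vw (xi - IZR k)).
  { intros k. apply per_term; auto. unfold S; lra. }
  set (dl := delta p dp dm xi).
  destruct (zsums_dom (fun k => FT_re h0 (2*PI) (xi - IZR k)) (fun k => K * vw (xi - IZR k)) (K * sv))
    as [sa [Hsa _]].
  { intros k. eapply Rle_trans. apply Hre. apply Rmult_le_compat_l; [lra| apply w_le_vw]. }
  { apply zsums_scal; auto. }
  pose proof (poisson_re h0 hc Hh0 xi sa Hsa) as Esa. rewrite Hh1 in Esa by lra.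
  destruct (zsums_dom (fun k => (dcoef p dp dm k - dl) * FT_re h0 (2*PI) (xi - IZR k))
             (fun k => (K * c) * vw (xi - IZR k)) ((K * c) * sv)) as [St [HSt BSt]].
  { intros k. rewrite Rabs_mult. pose proof (Rabs_pos (dcoef p dp dm k - dl)).
    apply Rle_trans with (Rabs (dcoef p dp dm k - dl) * (K * / (1 + Rabs (xi - IZR k)) ^ (m + 2))).
    apply Rmult_le_compat_l; auto.
    specialize (Hpt k). fold dl in Hpt.
    replace (K * c * vw (xi - IZR k)) with (K * (c * vw (xi - IZR k))) by ring.
    replace (Rabs (dcoef p dp dm k - dl) * (K * / (1 + Rabs (xi - IZR k)) ^ (m + 2))) with
       (K * (Rabs (dcoef p dp dm k - dl) * / (1 + Rabs (xi - IZR k)) ^ (m + 2))) by ring.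
    apply Rmult_le_compat_l; lra. }
  { apply zsums_scal; auto. }
  assert (Ere : D1_hat_re p dp dm h0 zeta xi = St).
  { unfold D1_hat_re, Dh0_hat_re. rewrite Hzeta. fold dl.
    rewrite (zsum_eq _ (St + dl * sa)). rewrite Esa. ring.
    apply (zsums_ext (fun k => (dcoef p dp dm k - dl) * FT_re h0 (2*PI) (xi - IZR k) + dl * FT_re h0 (2*PI) (xi - IZR k))).
    intros; ring. apply zsums_plus; auto. apply zsums_scal; auto. }
  destruct (zsums_dom (fun k => FT_im h0 (2*PI) (xi - IZR k)) (fun k => K * vw (xi - IZR k)) (K * sv))
    as [sb [Hsb _]].
  { intros k. eapply Rle_trans. apply Him. apply Rmult_le_compat_l; [lra| apply w_le_vw]. }
  { apply zsums_scal; auto. }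
  pose proof (poisson_im h0 hc Hh0 xi sb Hsb) as Esb.
  destruct (zsums_dom (fun k => (dcoef p dp dm k - dl) * FT_im h0 (2*PI) (xi - IZR k))
             (fun k => (K * c) * vw (xi - IZR k)) ((K * c) * sv)) as [St' [HSt' BSt']].
  { intros k. rewrite Rabs_mult. pose proof (Rabs_pos (dcoef p dp dm k - dl)).
    apply Rle_trans with (Rabs (dcoef p dp dm k - dl) * (K * / (1 + Rabs (xi - IZR k)) ^ (m + 2))).
    apply Rmult_le_compat_l; auto.
    specialize (Hpt k). fold dl in Hpt.
    replace (K * c * vw (xi - IZR k)) with (K * (c * vw (xi - IZR k))) by ring.
    replace (Rabs (dcoef p dp dm k - dl) * (K * / (1 + Rabs (xi - IZR k)) ^ (m + 2))) with
       (K * (Rabs (dcoef p dp dm k - dl) * / (1 + Rabs (xi - IZR k)) ^ (m + 2))) by ring.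
    apply Rmult_le_compat_l; lra. }
  { apply zsums_scal; auto. }
  assert (Eim : D1_hat_im p dp dm h0 zeta xi = St').
  { unfold D1_hat_im, Dh0_hat_im.
    rewrite (zsum_eq _ (St' + dl * sb)). rewrite Esb. ring.
    apply (zsums_ext (fun k => (dcoef p dp dm k - dl) * FT_im h0 (2*PI) (xi - IZR k) + dl * FT_im h0 (2*PI) (xi - IZR k))).
    intros; ring. apply zsums_plus; auto. apply zsums_scal; auto. }
  rewrite Ere, Eim.
  eapply Rle_trans. apply sqrt_sum_le.
  assert (HKc : K * c * sv <= K * c * (4 * PI)) by (apply Rmult_le_compat_l; [apply Rmult_le_pos; lra| lra]).
  pose proof (cfun_small p S m X Hp0 ltac:(lra) HS HX2) as Hcs. fold c in Hcs. fold A0 in Hcs.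
  pose proof (Rpower_pos X (-p)) as HRp.
  assert (HXe : 8 * PI * K * A0 / X <= eps).
  { apply Rmult_le_reg_r with X. lra. unfold Rdiv. rewrite Rmult_assoc, Rinv_l, Rmult_1_r by lra.
    assert (8 * PI * K * A0 / eps * eps = 8 * PI * K * A0) by (field; lra).
    nra. }
  apply Rle_trans with (2 * (K * c * (4 * PI))). lra.
  apply Rle_trans with (8 * PI * K * (A0 * (Rpower X (- p) / X))).
  { assert (0 <= 8 * PI * K) by (apply Rmult_le_pos; lra). nra. }
  replace (8 * PI * K * (A0 * (Rpower X (- p) / X))) with ((8 * PI * K * A0 / X) * Rpower X (- p))
    by (field; lra).
  apply Rmult_le_compat_r; lra.
Qed.
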